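(* Let $n$ be a positive integer and $x\in\Gamma_n$. Then \[ \textsc{BPSP}(x)=\xi_n\bigl(\sigma_{\mathrm{RF}}(x)\bigr)-\textsc{MaxCut}(G_x)=n-\tfrac12+\tfrac12\,\#_{\mathrm{dl}}(x)+\tfrac12\,W_{\mathrm{tot}}(G_x)-\textsc{MaxCut}(G_x), \] and \[ \widetilde{\textsc{BPSP}^*}(x)=\textsc{MaxCut}^*(G_x). \]
   Context: Let $[n]=\{1,\dots,n\}$. $\Gamma_n$ is the set of words $x=(x_1,\dots,x_{2n})\in[n]^{2n}$ in which every symbol $i\in[n]$ occurs exactly twice. Colours are the formal symbols $r,b$; $\neg$ swaps $r$ and $b$, $\neg^0$ is the identity and $\neg^1=\neg$. $[\,\cdot\,]$ is the Iverson bracket (1 if true, 0 otherwise). For $i\in[2n-1]$, $\eta(x,i)=[x_{i+1}\in\{x_1,\dots,x_i\}]\oplus[x_i\in\{x_1,\dots,x_{i-1}\}]$ ($\oplus$ = exclusive or). The set of valid colourings is $\Xi_n(x)=\{f\in\{r,b\}^{2n}:\ \forall i\neq j,\ x_i=x_j\Rightarrow f_i\neq f_j\}$, and for $f\in\{r,b\}^{2n}$, $\xi_n(f)=\sum_{i=1}^{2n-1}[f_i\neq f_{i+1}]$. $\textsc{BPSP}(x)=\min_{f\in\Xi_n(x)}\xi_n(f)$. The red-first colouring $\sigma_{\mathrm{RF}}(x)\in\{r,b\}^{2n}$ has $i$-th entry $r$ if $x_i\notin\{x_1,\dots,x_{i-1}\}$ and $b$ otherwise. For $z\in\{r,b\}^n$,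 $\mathcal E_n(x,z)\in\{r,b\}^{2n}$ has $i$-th entry $\neg^{[x_i\in\{x_1,\dots,x_{i-1}\}]}z_{x_i}$, and $\tilde\xi_n(x,z)=\xi_n(\mathcal E_n(x,z))$; $\widetilde{\textsc{BPSP}^*}(x)=\operatorname{argmin}_{z\in\{r,b\}^n}\tilde\xi_n(x,z)$ (a set). For a subset $e\subseteq[n]$, $\theta_x(e)=-\sum_{i=1}^{2n-1}(-1)^{\eta(x,i)}\delta_{e,\{x_i,x_{i+1}\}}$. The BPSP graph is the weighted graph $G_x=(V_x,E_x,W_x)$ with $V_x=[n]$, $E_x=\{\{x_i,x_{i+1}\}: i\in[2n-1],\ x_i\neq x_{i+1},\ \theta_x(\{x_i,x_{i+1}\})\neq0\}$ and $W_x=\theta_x|_{E_x}$. For a weighted graph $G=(V,E,W)$ with $V=[n]$: $W_{\mathrm{tot}}(G)=\sum_{\{i,j\}\in E}W(\{i,j\})$; for $z\in\{r,b\}^n$, $\mathrm{wt}_G(z)=\sum_{\{i,j\}\in E}W(\{i,j\})[z_i\neq z_j]$; $\textsc{MaxCut}(G)=\max_{z\in\{r,b\}^n}\mathrm{wt}_G(z)$ and $\textsc{MaxCut}^*(G)=\operatorname{argmax}_{z\in\{r,b\}^n}\mathrm{wt}_G(z)$. The double letter count is $\#_{\mathrm{dl}}(x)=|\{i\in[2n-1]: x_i=x_{i+1}\}|$. *)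

(* Defs.v *)
From mathcomp Require Import all_boot all_order all_algebra.
Set Implicit Arguments. Unset Strict Implicit. Unset Printing Implicit Defensive.
Import Order.TTheory GRing.Theory Num.Theory.
Local Open Scope ring_scope.

(* Positions 1..2n are 'I_(2*n) (0-based), symbols 1..n are 'I_n (0-based).
   Colours: bool, with r := true, b := false, and neg := negb. *)
Notation col := bool (only parsing).
Definition rc : col := true.
Definition bc : col := false.

Definition word (n : nat) := {ffun 'I_(2 * n) -> 'I_n}.
Definition colouring (n : nat) := {ffun 'I_(2 * n) -> col}.

Definition Gamma (n : nat) (x : word n) : bool :=
  [forall s : 'I_n, #|[set i | x i == s]| == 2].

Definition seen n (x : word n) (i : 'I_(2 * n)) : bool :=
  [exists j : 'I_(2 * n), (j < i)%N && (x j == x i)].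

(* eta(x,i) for the consecutive pair (i, j) with j = i+1 *)
Definition eta n (x : word n) (i j : 'I_(2 * n)) : bool :=
  seen x j (+) seen x i.

Definition Xi n (x : word n) : {set colouring n} :=
  [set f : colouring n | [forall i, forall j,
      ((i != j) && (x i == x j)) ==> (f i != f j)]].

Definition xi n (f : colouring n) : nat :=
  (\sum_(i : 'I_(2 * n)) \sum_(j : 'I_(2 * n) | val j == (val i).+1) (f i != f j : nat))%N.

(* BPSP(x) = min over valid colourings; the default 2n exceeds every xi value
   (xi <= 2n-1), so this is the true minimum whenever Xi x is nonempty. *)
Definition BPSP n (x : word n) : nat :=
  (\big[minn/(2 * n)%N]_(f in Xi x) xi f)%N.

Definition sigma_RF n (x : word n) : colouring n :=
  [ffun i => if seen x i then bc else rc].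

Definition Enc n (x : word n) (z : {ffun 'I_n -> col}) : colouring n :=
  [ffun i => if seen x i then ~~ z (x i) else z (x i)].

Definition xitilde n (x : word n) (z : {ffun 'I_n -> col}) : nat := xi (Enc x z).

Definition BPSPstar_tilde n (x : word n) : {set {ffun 'I_n -> col}} :=
  [set z | [forall z', (xitilde x z <= xitilde x z')%N]].

Definition theta n (x : word n) (e : {set 'I_n}) : int :=
  - \sum_(i : 'I_(2 * n)) \sum_(j : 'I_(2 * n) | val j == (val i).+1)
      ((-1) ^+ eta x i j * (e == [set x i; x j])%:R).

(* weighted graph on vertex set 'I_n, edges as 2-element subsets *)
Record wgraph (n : nat) := WGraph {
  wedges : {set {set 'I_n}};
  wweight : {set 'I_n} -> int }.

Definition BPSP_graph n (x : word n) : wgraph n :=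
  WGraph [set e : {set 'I_n} |
            [exists i : 'I_(2 * n), exists j : 'I_(2 * n),
               [&& val j == (val i).+1, x i != x j & e == [set x i; x j]]]
            && (theta x e != 0)]
         (theta x).

Definition Wtot n (G : wgraph n) : int := \sum_(e in wedges G) wweight G e.

Definition cut n (z : {ffun 'I_n -> col}) (e : {set 'I_n}) : bool :=
  [exists i in e, exists j in e, z i != z j].

Definition wt n (G : wgraph n) (z : {ffun 'I_n -> col}) : int :=
  \sum_(e in wedges G) wweight G e * (cut z e)%:R.

Definition z_all_red n : {ffun 'I_n -> col} := [ffun => rc].

Definition MaxCut n (G : wgraph n) : int :=
  \big[Num.max/wt G (z_all_red n)]_(z : {ffun 'I_n -> col}) wt G z.

Definition MaxCutStar n (G : wgraph n) : {set {ffun 'I_n -> col}} :=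
  [set z | wt G z == MaxCut G].

Definition dl_count n (x : word n) : nat :=
  (\sum_(i : 'I_(2 * n)) \sum_(j : 'I_(2 * n) | val j == (val i).+1) (x i == x j : nat))%N.

(* Main.v *)
Require Import Defs.
From mathcomp Require Import all_boot all_order all_algebra.
Set Implicit Arguments. Unset Strict Implicit. Unset Printing Implicit Defensive.
From mathcomp Require Import lra.
Import Order.TTheory GRing.Theory Num.Theory.
Local Open Scope ring_scope.

Section S.
Variables (n : nat) (x : word n).

Definition P (F : 'I_(2 * n) -> 'I_(2 * n) -> int) : int :=
  \sum_(i : 'I_(2 * n)) \sum_(j : 'I_(2 * n) | val j == (val i).+1) F i j.

Lemma three (Hg : Gamma x) (a b c : 'I_(2 * n)) :
  (val a < val b)%N -> (val b < val c)%N -> x a = x b -> x b = x c -> False.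
Proof.
move=> ab bc xab xbc.
move/forallP: Hg => /(_ (x a)) /eqP Hc.
have sub : [set a; b; c] \subset [set i | x i == x a].
  apply/subsetP => i; rewrite !inE => /orP[/orP[]|] /eqP ->; rewrite ?xab ?xbc //.
have := subset_leq_card sub; rewrite Hc.
rewrite -setUA !cardsU1 cards1 !inE.
idtac.
have ->: (a == b) = false by apply/negbTE; apply/eqP => e; move: ab; rewrite e ltnn.
have ->: (b == c) = false by apply/negbTE; apply/eqP => e; move: bc; rewrite e ltnn.
have ->: (a == c) = false.
  by apply/negbTE; apply/eqP => e; move: (ltn_trans ab bc); rewrite e ltnn.
by [].
Qed.

Lemma seen_unseen (i k : 'I_(2 * n)) :
  ~~ seen x i -> ~~ seen x k -> x k = x i -> k = i.
Proof.
move=> si sk xki; apply/val_inj/eqP; case: (ltngtP (val k) (val i)) => // h.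
  by case/negP: si; apply/existsP; exists k; rewrite h xki eqxx.
by case/negP: sk; apply/existsP; exists i; rewrite h xki eqxx.
Qed.

Lemma exists_unseen (i : 'I_(2 * n)) : exists k, (x k == x i) && ~~ seen x k.
Proof.
case: (@arg_minnP _ i (fun k => x k == x i) val (eqxx _)) => k /eqP xk hmin.
exists k; rewrite xk eqxx /=; apply/existsP => -[j /andP[jk /eqP xj]].
by have := hmin j; rewrite xj xk eqxx => /(_ isT); rewrite leqNgt jk.
Qed.

Lemma Xi_Enc (f : colouring n) : f \in Xi x -> exists z, f = Enc x z.
Proof.
rewrite inE => /forallP Hf.
exists [ffun s => if [pick k | (x k == s) && ~~ seen x k] is Some k then f k else true].
apply/ffunP => i; rewrite !ffunE.
case: pickP => [k /andP[/eqP xk nk] | none]; last first.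
  by have [k hk] := exists_unseen i; have := none k; rewrite hk.
case si: (seen x i).
  have ki : i != k by apply/eqP => e; move: nk; rewrite -e si.
  have := Hf i => /forallP /(_ k); rewrite ki xk eqxx /=.
  by case: (f i); case: (f k).
by rewrite (seen_unseen (negbT si) nk xk).
Qed.

Lemma Enc_Xi (Hg : Gamma x) z : Enc x z \in Xi x.
Proof.
rewrite inE; apply/forallP => i; apply/forallP => j; apply/implyP => /andP[ij /eqP xij].
rewrite !ffunE -xij.
suff : seen x i != seen x j by case: (seen x i); case: (seen x j); case: (z (x i)).
wlog lt : i j ij xij / (val i < val j)%N.
  move=> H; case: (ltngtP (val i) (val j)) => h; first exact: H.
    by rewrite eq_sym; apply: H => //; rewrite eq_sym.
  by case/eqP: ij; apply/val_inj.
have -> : seen x j by apply/existsP; exists i; rewrite lt xij eqxx.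
apply/negP => /eqP /existsP [k /andP[ki /eqP xk]].
exact: (three Hg ki lt xk xij).
Qed.


Definition Spred (e : {set 'I_n}) : bool :=
  [exists i : 'I_(2 * n), exists j : 'I_(2 * n),
     [&& val j == (val i).+1, x i != x j & e == [set x i; x j]]].

Lemma Spred_pair (i j : 'I_(2 * n)) :
  val j == (val i).+1 -> Spred [set x i; x j] = (x i != x j).
Proof.
move=> hij; apply/idP/idP => [/existsP[i' /existsP[j' /and3P[_ ne /eqP E]]]|ne].
  apply/eqP => e; move: ne; rewrite -e setUid in E.
  have : x i' \in [set x i] by rewrite E !inE eqxx.
  have : x j' \in [set x i] by rewrite E !inE eqxx orbT.
  by rewrite !inE => /eqP -> /eqP ->; rewrite eqxx.
by apply/existsP; exists i; apply/existsP; exists j; rewrite hij ne eqxx.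
Qed.

Lemma cut2 (z : {ffun 'I_n -> bool}) a b : cut z [set a; b] = (z a != z b).
Proof.
apply/idP/idP => [/existsP[i /andP[]]|ne].
  rewrite !inE => /orP[]/eqP -> /existsP[j /andP[]]; rewrite !inE => /orP[]/eqP ->;
  by rewrite ?eqxx // eq_sym.
apply/existsP; exists a; rewrite !inE eqxx /=; apply/existsP; exists b.
by rewrite !inE eqxx orbT.
Qed.

Lemma wsum (c : {set 'I_n} -> int) :
  \sum_(e in wedges (BPSP_graph x)) wweight (BPSP_graph x) e * c e =
  - P (fun i j => (-1) ^+ eta x i j *
          (if Spred [set x i; x j] then c [set x i; x j] else 0)).
Proof.
rewrite /=.
have -> : \sum_(e in [set e : {set 'I_n} | Spred e && (theta x e != 0)]) theta x e * c e
   = \sum_(e | Spred e) theta x e * c e.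
  rewrite big_mkcond [RHS]big_mkcond; apply: eq_bigr => e _; rewrite inE.
  case: (Spred e) => //=; case: eqP => [->|] //; by rewrite mul0r.
rewrite /theta /P.
under eq_bigr => e _ do rewrite mulNr big_distrl /=.
rewrite sumrN; congr (- _).
rewrite exchange_big /=; apply: eq_bigr => i _.
under eq_bigr => e _ do rewrite big_distrl /=.
rewrite exchange_big /=; apply: eq_bigr => j hij.
under eq_bigr => e _ do rewrite -mulrA.
rewrite -big_distrr /=; congr (_ * _).
case h: (Spred [set x i; x j]).
  rewrite (bigD1 [set x i; x j]) //= eqxx mul1r big1 ?addr0 // => e /andP[_ ne].
  by rewrite (negbTE ne) mul0r.
rewrite big1 // => e se; case: eqP => [ee|]; first by rewrite ee h in se.
by rewrite mul0r.
Qed.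

Lemma wt_eq z : wt (BPSP_graph x) z =
  - P (fun i j => (-1) ^+ eta x i j * (z (x i) != z (x j))%:R).
Proof.
rewrite /wt wsum; congr (- _); apply: eq_bigr => i _; apply: eq_bigr => j hij.
rewrite Spred_pair //; case: eqP => [->|_]; first by rewrite eqxx mulr0.
by rewrite cut2.
Qed.

Lemma Wtot_eq : Wtot (BPSP_graph x) =
  - P (fun i j => (-1) ^+ eta x i j * (x i != x j)%:R).
Proof.
rewrite /Wtot.
under eq_bigr => e _ do rewrite -[wweight _ e]mulr1.
rewrite (wsum (fun _ => 1)); congr (- _); apply: eq_bigr => i _; apply: eq_bigr => j hij.
by rewrite Spred_pair //; case: (x i != x j).
Qed.

Lemma xi_int (f : colouring n) :
  (xi f)%:R = P (fun i j => (f i != f j)%:R) :> int.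
Proof. by rewrite /xi natr_sum; apply: eq_bigr => i _; rewrite natr_sum. Qed.

Lemma xi_Enc z : (xi (Enc x z))%:R =
  P (fun i j => (eta x i j)%:R) - wt (BPSP_graph x) z :> int.
Proof.
rewrite xi_int wt_eq opprK /P -big_split /=; apply: eq_bigr => i _.
rewrite -big_split /=; apply: eq_bigr => j _.
rewrite /Enc /eta !ffunE.
by case: (seen x i); case: (seen x j); case: (z (x i)); case: (z (x j)).
Qed.

Lemma Enc_red : Enc x (z_all_red n) = sigma_RF x.
Proof. by apply/ffunP => i; rewrite !ffunE; case: (seen x i). Qed.

Lemma xi_RF : (xi (sigma_RF x))%:R = P (fun i j => (eta x i j)%:R) :> int.
Proof.
rewrite -Enc_red xi_Enc wt_eq.
suff -> : P (fun i j => (-1) ^+ eta x i j * (z_all_red n (x i) != z_all_red n (x j))%:R) = 0.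
  by rewrite oppr0 subr0.
by rewrite /P big1 // => i _; rewrite big1 // => j _; rewrite !ffunE eqxx mulr0.
Qed.

Lemma count_pairs m :
  (\sum_(i < m) \sum_(j < m | val j == (val i).+1) 1 = m.-1)%N.
Proof.
have inner (i : 'I_m) : (\sum_(j < m | val j == (val i).+1) 1 = (i.+1 < m))%N.
  case h: (i.+1 < m)%N.
    rewrite (big_pred1 (Ordinal h)) // => k /=.
  rewrite big_pred0 // => k; apply/eqP => e; by move: (ltn_ord k); rewrite e h.
rewrite (eq_bigr _ (fun i _ => inner i)); clear inner.
case: m => [|m]; first by rewrite big_ord0.
rewrite big_ord_recr /= ltnn addn0.
rewrite (eq_bigr (fun _ => 1%N)) => [|i _]; last by rewrite ltnS ltn_ord.
by rewrite sum_nat_const card_ord muln1.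
Qed.

Lemma dl_eta (Hg : Gamma x) (i j : 'I_(2 * n)) :
  val j == (val i).+1 -> x i = x j -> eta x i j = true.
Proof.
move=> /eqP hij xij; rewrite /eta.
have -> : seen x j by apply/existsP; exists i; rewrite hij ltnSn xij eqxx.
suff -> : seen x i = false by [].
apply/negbTE/negP => /existsP [k /andP[ki /eqP xk]].
by apply: (three Hg ki _ xk xij); rewrite hij.
Qed.

Lemma PD F G : P (fun i j => F i j + G i j) = P F + P G.
Proof. rewrite /P -big_split; apply: eq_bigr => i _; exact: big_split. Qed.
Lemma PN F : P (fun i j => - F i j) = - P F.
Proof. rewrite /P -sumrN; apply: eq_bigr => i _; exact: sumrN. Qed.
Lemma PM c F : P (fun i j => c * F i j) = c * P F.
Proof. rewrite /P mulr_sumr; apply: eq_bigr => i _; by rewrite mulr_sumr. Qed.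
Lemma P_ext F G : (forall i j, val j == (val i).+1 -> F i j = G i j) -> P F = P G.
Proof. by move=> h; apply: eq_bigr => i _; apply: eq_bigr => j; apply: h. Qed.

Lemma K2 (Hg : Gamma x) :
  2 * P (fun i j => (eta x i j)%:R) =
  ((2 * n).-1)%:R + (dl_count x)%:R + Wtot (BPSP_graph x).
Proof.
have h1 : ((2 * n).-1)%:R = P (fun _ _ => 1) :> int.
  by rewrite -count_pairs natr_sum; apply: eq_bigr => i _; rewrite natr_sum.
have h2 : (dl_count x)%:R = P (fun i j => (x i == x j)%:R) :> int.
  by rewrite natr_sum; apply: eq_bigr => i _; rewrite natr_sum.
rewrite h1 h2 Wtot_eq -PM -!PD -PN -PD.
apply: P_ext => i j hij.
case: (eqVneq (x i) (x j)) => [e|ne].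
  by rewrite (dl_eta Hg hij e).
by case: (eta x i j).
Qed.

End S.

Lemma bigmin_le (I : eqType) (r : seq I) (Pr : pred I) (F : I -> nat) d i0 :
  i0 \in r -> Pr i0 -> (\big[minn/d]_(i <- r | Pr i) F i <= F i0)%N.
Proof.
elim: r => // a r IH; rewrite in_cons big_cons => /orP[/eqP <- -> | /IH h p].
  exact: geq_minl.
case: (Pr a); [exact: leq_trans (geq_minr _ _) (h p) | exact: h p].
Qed.

Lemma nR (m : nat) : (((m%:R : int)%:~R) : rat) = m%:R.
Proof. by rewrite mulrz_nat. Qed.

Theorem corollary4 (n : nat) (x : word n) :
  (0 < n)%N -> Gamma x ->
  [/\ (BPSP x)%:R = (xi (sigma_RF x))%:R - (MaxCut (BPSP_graph x))%:~R :> rat,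
      (xi (sigma_RF x))%:R - (MaxCut (BPSP_graph x))%:~R
        = n%:R - 1 / 2 + (dl_count x)%:R / 2 + (Wtot (BPSP_graph x))%:~R / 2
          - (MaxCut (BPSP_graph x))%:~R :> rat
    & BPSPstar_tilde x = MaxCutStar (BPSP_graph x)].
Proof.
move=> Hn Hg.
set G := BPSP_graph x.
have ub : forall z, wt G z <= MaxCut G by move=> z; exact: le_bigmax.
have [zm hzm] : exists zm, wt G zm = MaxCut G.
  rewrite /MaxCut; apply: (big_ind (fun m => exists z0, wt G z0 = m)).
  - by exists (z_all_red n).
  - move=> a b [za <-] [zb <-]; rewrite maxEle; case: ifP => _.
      by exists zb.
    by exists za.
  - by move=> z _; exists z.
have E1 : forall z, (xi (Enc x z))%:R = (xi (sigma_RF x))%:R - wt G z :> int.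
  by move=> z; rewrite xi_Enc xi_RF.
have cmp : forall z z', (xi (Enc x z) <= xi (Enc x z'))%N = (wt G z' <= wt G z).
  by move=> z z'; rewrite -(ler_nat int) !E1 lerD2l lerN2.
have bnd : forall f : colouring n, (xi f <= 2 * n)%N.
  move=> f; apply: (leq_trans _ (leq_pred _)); rewrite -count_pairs.
  by apply: leq_sum => i _; apply: leq_sum => j _; apply: leq_b1.
have B : BPSP x = xi (Enc x zm).
  apply/eqP; rewrite eqn_leq; apply/andP; split.
    by rewrite /BPSP; apply: bigmin_le; [exact: mem_index_enum | exact: Enc_Xi].
  rewrite /BPSP; apply: (big_ind (fun m => xi (Enc x zm) <= m)%N) => //.
    by move=> a b ha hb; rewrite leq_min ha hb.
  by move=> f /Xi_Enc [z ->]; rewrite cmp hzm ub.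
have Bint : (BPSP x)%:R = (xi (sigma_RF x))%:R - MaxCut G :> int by rewrite B E1 hzm.
split.
- have := congr1 (fun v : int => (v%:~R : rat)) Bint; rewrite /= intrB !nR => ->.
  by [].
- have K := K2 Hg.
  have := congr1 (fun v : int => (v%:~R : rat)) K.
  rewrite /= intrM !intrD -xi_RF !nR ?mulr1z.
  rewrite (_ : ((2 * n).-1)%:R = 2 * n%:R - 1 :> rat); last first.
    by rewrite -subn1 natrB ?muln_gt0 // natrM.

  move=> h; lra.
- apply/setP => z; rewrite !inE /xitilde; apply/forallP/eqP => [h|e].
    by apply/eqP; rewrite eq_le ub /= -hzm -cmp h.
  by move=> z'; rewrite cmp e ub.
Qed.
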